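(* Let $\phi:\mathbb{R}^{d}\to\mathbb{R}^{d}$ be a $C^{2}$ diffeomorphism, $x_{1}\in\mathbb{R}^{d}$ and $x_{j}=\phi^{j-1}(x_{1})$. If $x_{1},\ldots,x_{D-1}$ are distinct, then the $(D-1)\times D_{\alpha}$ matrix $V(x_{1})$ (defined in the context) has rank $D-1$, i.e. rank equal to its number of rows.
   Context: $\pi_{1}$ is the first coordinate projection, $\mathbf{e}_{1}=(1,0,\ldots,0)$. For a multi-index $\alpha\in\mathbb{Z}_{\geq0}^{d}$, $p_{\alpha}(x)=\prod_i(\pi_{i}x)^{\alpha_{i}}$; $\mathcal{I}_{2D-1}$ is the set of multi-indices with $|\alpha|=\sum_i\alpha_i\leq2D-1$, of cardinality $D_{\alpha}$. For $c=(c_{\alpha})\in\mathbb{R}^{D_{\alpha}}$ let $\phi_{c}(x)=\phi(x)+\mathbf{e}_{1}\sum_{\alpha\in\mathcal{I}_{2D-1}}c_{\alpha}p_{\alpha}(x)$. The matrix $V(x_{1})$ has rows $j=1,\ldots,D-1$ equal to the gradient with respect to $c$ at $c=0$ of $c\mapsto\pi_{1}\phi_{c}^{j}(x_{1})$; equivalently, with $F_{c}(x_{1})=(\pi_{1}x_{1},\pi_{1}\phi_{c}(x_{1}),\ldots,\pi_{1}\phi_{c}^{D-1}(x_{1}))$, one has $F_{c}(x_{1})=F_{0}(x_{1})+\binom{0}{V(x_{1})}c+O(\|c\|^{2})$. *)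

(* Defs.v *)
From HB Require Import structures.
From mathcomp Require Import all_boot all_order all_algebra.
From mathcomp Require Import all_classical all_reals all_analysis.
Set Implicit Arguments. Unset Strict Implicit. Unset Printing Implicit Defensive.
Import Order.TTheory GRing.Theory Num.Theory.
Import numFieldNormedType.Exports.
Local Open Scope ring_scope.

Section Defs.
Variable R : realType.

Definition C2 (m : nat) (f : 'rV[R]_m -> 'rV[R]_m) : Prop :=
  continuous f /\
  (forall u x, derivable f x u) /\ (forall u, continuous ('D_u f)) /\
  (forall u v x, derivable ('D_u f) x v) /\
  (forall u v, continuous ('D_v ('D_u f))).

Definition C2_diffeo (m : nat) (f : 'rV[R]_m -> 'rV[R]_m) : Prop :=
  C2 f /\ exists g : 'rV[R]_m -> 'rV[R]_m, [/\ cancel f g, cancel g f & C2 g].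

(* Multi-indices alpha in Z_{>=0}^{d+1} with |alpha| <= 2D-1.
   Each entry is automatically <= 2D-1 < 2D. *)
Definition multi_index (d D : nat) : finType :=
  {a : {ffun 'I_d.+1 -> 'I_(2 * D)} | \sum_(i < d.+1) (a i : nat) <= (2 * D).-1}%N.

(* D_alpha := #|multi_index d D| *)

Definition p_alpha (d D : nat) (a : multi_index d D) (x : 'rV[R]_d.+1) : R :=
  \prod_(i < d.+1) (x ord0 i) ^+ (val a i : nat).

Definition e1 (d : nat) : 'rV[R]_d.+1 := \row_(i < d.+1) ((i == ord0)%:R).

Definition phi_c (d D : nat) (phi : 'rV[R]_d.+1 -> 'rV[R]_d.+1)
  (c : 'rV[R]_#|multi_index d D|) (x : 'rV[R]_d.+1) : 'rV[R]_d.+1 :=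
  phi x + (\sum_(a : multi_index d D) c ord0 (enum_rank a) * p_alpha a x) *: e1 d.

Definition basis_c (n : nat) (k : 'I_n) : 'rV[R]_n := \row_(l < n) ((l == k)%:R).

(* V(x_1): (D-1) x D_alpha matrix; row j (j = i+1, i : 'I_(D-1)) is the gradient
   in c at c = 0 of c |-> pi_1 (phi_c^j (x_1)), i.e. its partial derivatives. *)
Definition Vmx (d D : nat) (phi : 'rV[R]_d.+1 -> 'rV[R]_d.+1) (x1 : 'rV[R]_d.+1)
  : 'M[R]_(D.-1, #|multi_index d D|) :=
  \matrix_(i < D.-1, k < #|multi_index d D|)
    ('D_(basis_c k) (fun c : 'rV[R]_#|multi_index d D| =>
        (iter i.+1 (phi_c phi c) x1) ord0 ord0) 0).

End Defs.

(* Main.v *)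
Require Import Defs.
From HB Require Import structures.
From mathcomp Require Import all_boot all_order all_algebra.
From mathcomp Require Import all_classical all_reals all_analysis.
From mathcomp Require Import ring zify.
Import Order.TTheory GRing.Theory Num.Theory.
Import numFieldNormedType.Exports.
Local Open Scope ring_scope.
Local Open Scope classical_set_scope.
Set Implicit Arguments. Unset Strict Implicit. Unset Printing Implicit Defensive.


Section S.
Variable R : realType.

Lemma normM_ge m n (M : 'M[R]_(m, n)) i j : `|M i j| <= `|M|.
Proof.
have /mapP[k Hk ->] : `|M i j| \in [seq `|M x.1 x.2| | x : 'I_m * 'I_n].
  by apply/mapP; exists (i, j) => //=; rewrite mem_enum.
by rewrite [leRHS]/Num.norm /= mx_normrE; apply/bigmax_geP; right => /=; exists k.
Qed.

Lemma normM_le m n (M : 'M[R]_(m, n)) c : 0 <= c ->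
  (forall i j, `|M i j| <= c) -> `|M| <= c.
Proof.
move=> c0 H; rewrite [leLHS]/Num.norm /= mx_normrE.
by apply/bigmax_leP; split => // -[i j] _; apply: H.
Qed.

Lemma line_is_derive n (f : 'rV[R]_n -> 'rV[R]_n) z E s r :
  derivable f (z + s *: E) E ->
  is_derive s (1:R) (fun t : R => f (z + t *: E) ord0 r) (('D_E f (z + s *: E)) ord0 r).
Proof.
move=> hd.
have e : (fun h : R => h^-1 *: (((fun t : R => f (z + t *: E)) \o shift s) (h *: 1) - f (z + s *: E)))
  = (fun h : R => h^-1 *: ((f \o shift (z + s *: E)) (h *: E) - f (z + s *: E))).
  apply/funext => h /=; congr (_ *: (f _ - _)).
  by rewrite [h *: 1]mulr1 scalerDl addrCA addrA.
have hM : derivable (fun t : R => f (z + t *: E)) s 1.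
  by rewrite /derivable e.
have hD : 'D_1 (fun t : R => f (z + t *: E)) s = 'D_E f (z + s *: E).
  by rewrite /derive e.
split.
  by move/derivable_mxP: hM; apply.
by rewrite -hD derive_mx // mxE.
Qed.

Lemma mvt0 (u : R -> R) : (forall x, derivable u x 1) ->
  forall t, exists c, `|c| <= `|t| /\ u t - u 0 = 'D_1 u c * t.
Proof.
move=> hd t.
have hc : continuous u.
  by move=> x; apply: differentiable_continuous; apply/derivable1_diffP.
have hid : forall x : R, is_derive x (1:R) u ('D_1 u x) by move=> x; apply: derivableP.
case: (leP 0 t) => t0.
  have [c /andP[c1 c2] ->] := MVT_segment t0 (fun x _ => hid x) (continuous_subspaceT hc).
  exists c; split; last by rewrite subr0.
  by rewrite !ger0_norm // in_itv /= ?(le_trans c1).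
have [c /andP[c1 c2] Hc] := MVT_segment (ltW t0) (fun x _ => hid x) (continuous_subspaceT hc).
exists c; split.
  by rewrite !ler0_norm ?lerN2 // ?(ltW t0) // ?(le_trans c2) // in_itv.
by rewrite -opprB Hc sub0r mulrN opprK.
Qed.


Definition Eb n (i : 'I_n) : 'rV[R]_n := delta_mx ord0 i.
Definition zpart n (y h : 'rV[R]_n) (k : nat) : 'rV[R]_n :=
  y + \row_l (if (l < k)%N then h ord0 l else 0).

Lemma zpartS n (y h : 'rV[R]_n) (i : 'I_n) :
  zpart y h i.+1 = zpart y h i + h ord0 i *: Eb i.
Proof.
apply/rowP => l; rewrite /zpart /Eb !mxE ltnS leq_eqVlt.
case: (eqVneq l i) => [->|li] /=.
  by rewrite ltnn eqxx mulr1 addr0.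
by move: li; rewrite -(inj_eq val_inj) => /negbTE -> /=; rewrite mulr0 !addr0.
Qed.

Lemma zpart0 n (y h : 'rV[R]_n) : zpart y h 0 = y.
Proof. by apply/rowP => l; rewrite /zpart !mxE addr0. Qed.

Lemma zpartn n (y h : 'rV[R]_n) : zpart y h n = h + y.
Proof. by apply/rowP => l; rewrite /zpart !mxE ltn_ord addrC. Qed.

Lemma core_est n (f : 'rV[R]_n -> 'rV[R]_n) (y h : 'rV[R]_n) (e' del : R) :
  (forall x u, derivable f x u) -> 0 <= e' ->
  (forall z, `|z - y| < del -> forall i, `|'D_(Eb i) f z - 'D_(Eb i) f y| <= e') ->
  `|h| < del ->
  `|f (h + y) - f y - h *m (\matrix_(i < n) 'D_(Eb i) f y)| <= n%:R * e' * `|h|.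
Proof.
move=> hd e0 hP hdel.
apply: normM_le => [|i0 r]; first by rewrite !mulr_ge0.
rewrite !mxE ord1.
rewrite -(zpartn y h) -{2}(zpart0 y h).
rewrite -(telescope_sumr (fun k => f (zpart y h k) 0 r) (leq0n n)) big_mkord -sumrB.
apply: le_trans (ler_norm_sum _ _ _) _.
rewrite -mulrA mulr_natl -[X in _ *+ X]card_ord -sumr_const.
apply: ler_sum => i _.
rewrite zpartS mxE.
set u := fun t : R => f (zpart y h i + t *: Eb i) ord0 r.
have hu : forall t : R, is_derive t (1:R) u (('D_(Eb i) f (zpart y h i + t *: Eb i)) ord0 r).
  by move=> t; apply: line_is_derive.
have [c [hc Hc]] := mvt0 (fun x => @ex_derive _ _ _ _ _ _ _ (hu x)) (h ord0 i).
have -> : f (zpart y h i + h ord0 i *: Eb i) ord0 r - f (zpart y h i) ord0 r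
   = u (h ord0 i) - u 0 by rewrite /u scale0r addr0.
rewrite Hc (@derive_val _ _ _ _ _ _ _ (hu c)).
rewrite [X in _ - X]mulrC -mulrBl normrM.
apply: ler_pM => //; last exact: normM_ge.
have := normM_ge ('D_(Eb i) f (zpart y h i + c *: Eb i) - 'D_(Eb i) f y) ord0 r.
rewrite !mxE => /le_trans; apply; apply: hP.
apply: le_lt_trans hdel.
apply: normM_le => // i1 l; rewrite !mxE /= (ord1 i1) eqxx /= [X in `|X|]addrC addrA addKr.
case: (ltnP l i) => li.
  have -> : (l == i) = false by apply/negbTE; rewrite -(inj_eq val_inj) neq_ltn li.
  rewrite mulr0 addr0; exact: normM_ge.
rewrite add0r normrM; case: eqP => [li2|_]; last by rewrite normr0 mulr0.
by rewrite normr1 mulr1 (le_trans hc) // normM_ge.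
Qed.



Lemma diff_partials n (f : 'rV[R]_n -> 'rV[R]_n) :
  (forall x u, derivable f x u) -> (forall u, continuous ('D_u f)) ->
  forall y, differentiable f y.
Proof.
move=> hd hc y.
set J := \matrix_(i < n) 'D_(Eb i) f y.
have contL' : continuous (fun h : 'rV[R]_n => h *m J).
  have -> : (fun h : 'rV[R]_n => h *m J) = (fun h => \sum_(i < n) (h ord0 i *: row i J)).
    by apply/funext => h; rewrite /= mulmx_sum_row.
  apply: (@continuous_big _ _ +%R 0 xpredT add_continuous) => i _ x.
  apply: continuousZr_tmp; exact: coord_continuous.
have contL : continuous (@mulmxr R 1 n n J) by exact: contL'.
have Hlo : f \o shift y = cst (f y) + @mulmxr R 1 n n J +o_ 0 id.
  apply/eqaddoP => _/posnumP[e].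
  pose e' := e%:num / (n%:R + 1).
  have e'0 : 0 < e' by rewrite divr_gt0 // ltr_wpDl.
  have : \forall z \near y, forall i, `|'D_(Eb i) f z - 'D_(Eb i) f y| <= e'.
    apply: (@filter_forall _ _ (fun i z => `|'D_(Eb i) f z - 'D_(Eb i) f y| <= e') (nbhs y) _) => i.
    have := hc (Eb i) y => /cvgrPdist_le /(_ _ e'0).
    by apply: filter_app; near=> z => H; rewrite distrC.
  move=> /nbhs_ballP [del del0 Hdel].
  apply/nbhs_ballP; exists del => // h /=.
  rewrite -ball_normE /= sub0r normrN => Hh.
  rewrite opprD addrA.
  have := @core_est n f y h e' del hd (ltW e'0) _ Hh.
  move=> /(_ _) /le_trans; apply.
    move=> z Hz; apply: Hdel; rewrite -ball_normE /= distrC //.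
  apply: ler_wpM2r => //.
  rewrite /e' mulrCA; apply: ler_piMr => //; rewrite ler_pdivrMr ?ltr_wpDl // mul1r lerDl //.

apply: (proj2 (diff_locallyP y f)); rewrite (diff_unique contL Hlo); split => //.
Unshelve. all: by end_near. Qed.
End S.


Section Gen.
Variable R : realType.
Variable V : normedModType R.

Lemma diff_bigsum (W : normedModType R) (I : Type) (r : seq I) (g : I -> V -> W) x :
  (forall i, differentiable (g i) x) -> differentiable (fun z => \sum_(i <- r) g i z) x.
Proof.
move=> h; elim: r => [|i r IH].
  have -> : (fun z => \sum_(i <- [::]) g i z) = cst 0.
    by apply/funext => z; rewrite big_nil.
  exact: differentiable_cst.
have -> : (fun z => \sum_(j <- i :: r) g j z) = g i + (fun z => \sum_(j <- r) g j z).
  by apply/funext => z; rewrite big_cons.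
exact: differentiableD.
Qed.

Lemma derive_bigsum (W : normedModType R) (I : Type) (r : seq I) (g : I -> V -> W) x v :
  (forall i, differentiable (g i) x) ->
  'D_v (fun z => \sum_(i <- r) g i z) x = \sum_(i <- r) 'D_v (g i) x.
Proof.
move=> h; elim: r => [|i r IH].
  have -> : (fun z => \sum_(i <- [::]) g i z) = cst 0.
    by apply/funext => z; rewrite big_nil.
  by rewrite derive_cst big_nil.
have -> : (fun z => \sum_(j <- i :: r) g j z) = g i + (fun z => \sum_(j <- r) g j z).
  by apply/funext => z; rewrite big_cons.
rewrite deriveD ?big_cons ?IH //; apply: diff_derivable => //.
exact: diff_bigsum.
Qed.

Lemma diff_bigprod (I : Type) (r : seq I) (g : I -> V -> R) x :
  (forall i, differentiable (g i) x) -> differentiable (fun z => \prod_(i <- r) g i z) x.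
Proof.
move=> h; elim: r => [|i r IH].
  have -> : (fun z => \prod_(i <- [::]) g i z) = cst 1.
    by apply/funext => z; rewrite big_nil.
  exact: differentiable_cst.
have -> : (fun z => \prod_(j <- i :: r) g j z) = g i * (fun z => \prod_(j <- r) g j z).
  by apply/funext => z; rewrite big_cons.
exact: differentiableM.
Qed.

Lemma diff_pow (f : V -> R) k x : differentiable f x -> differentiable (fun z => f z ^+ k) x.
Proof.
move=> h; elim: k => [|k IH].
  have -> : (fun z => f z ^+ 0) = cst 1 by apply/funext => z; rewrite expr0.
  exact: differentiable_cst.
have -> : (fun z => f z ^+ k.+1) = f * (fun z => f z ^+ k).
  by apply/funext => z; rewrite exprS.
exact: differentiableM.
Qed.

Lemma derive_Zl (W : normedModType R) (k : V -> R) (w : W) x v :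
  differentiable k x -> 'D_v (fun z => k z *: w) x = 'D_v k x *: w.
Proof.
move=> h; rewrite !deriveE //; last exact: differentiableZl.
by rewrite diffZl.
Qed.

Lemma derive_comp (W U : normedModType R) (f : V -> U) (g : U -> W) x v :
  differentiable f x -> differentiable g (f x) ->
  'D_v (g \o f) x = 'd g (f x) ('D_v f x).
Proof.
move=> hf hg; rewrite (deriveE _ (differentiable_comp hf hg)) (deriveE _ hf).
by rewrite diff_comp.
Qed.

Lemma derive_coord m n (x v : 'M[R]_(m, n)) i j :
  'D_v (fun z : 'M[R]_(m, n) => z i j) x = v i j.
Proof.
have := @derive_mx R _ m n id x v (@derivable_id _ _ x v).
move=> /(congr1 (fun M : 'M[R]_(m, n) => M i j)) /=; rewrite derive_id mxE => ->.
by [].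
Qed.

End Gen.

Section Phi.
Variable R : realType.
Variables (d D : nat) (phi : 'rV[R]_d.+1 -> 'rV[R]_d.+1) (x1 : 'rV[R]_d.+1).
Hypothesis hphi : forall y, differentiable phi y.
Local Notation N := #|multi_index d D|.

Definition Phi j (c : 'rV[R]_N) := iter j (phi_c (D:=D) phi c) x1.
Definition sfun j (c : 'rV[R]_N) :=
  \sum_(a : multi_index d D) c ord0 (enum_rank a) * p_alpha a (Phi j c).

Lemma PhiS j : Phi j.+1 = (phi \o Phi j) + (fun c => sfun j c *: e1 R d).
Proof. by apply/funext => c. Qed.

Lemma phi_c0 : phi_c (D:=D) phi 0 = phi.
Proof.
apply/funext => x; rewrite /phi_c big1 ?scale0r ?addr0 // => a _.
by rewrite mxE mul0r.
Qed.

Lemma Phi0 j : Phi j 0 = iter j phi x1.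
Proof. by rewrite /Phi phi_c0. Qed.

Lemma p_alpha_diff a y : differentiable (@p_alpha R d D a) y.
Proof.
apply: diff_bigprod => i; apply: diff_pow; exact: differentiable_coord.
Qed.

Lemma term_diff j a : differentiable (Phi j) 0 ->
  differentiable (fun c : 'rV[R]_N => c ord0 (enum_rank a) * p_alpha a (Phi j c)) 0.
Proof.
move=> IH.
have -> : (fun c : 'rV[R]_N => c ord0 (enum_rank a) * p_alpha a (Phi j c)) =
   (fun c : 'rV[R]_N => c ord0 (enum_rank a)) * (p_alpha a \o Phi j) by [].
apply: differentiableM; first exact: differentiable_coord.
apply: differentiable_comp => //; exact: p_alpha_diff.
Qed.

Lemma Phi_diff j : differentiable (Phi j) 0.
Proof.
elim: j => [|j IH].
  have -> : Phi 0 = cst x1 by apply/funext.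
  exact: differentiable_cst.
rewrite PhiS; apply: differentiableD.
  by apply: differentiable_comp.
apply: differentiableZl; apply: diff_bigsum => a.
exact: term_diff.
Qed.

Lemma sfun_diff j : differentiable (sfun j) 0.
Proof. by apply: diff_bigsum => a; apply: term_diff; apply: Phi_diff. Qed.

Lemma term_D j a k :
  'D_(basis_c R k) (fun c : 'rV[R]_N => c ord0 (enum_rank a) * p_alpha a (Phi j c)) 0
  = (enum_rank a == k)%:R * p_alpha a (iter j phi x1).
Proof.
have -> : (fun c : 'rV[R]_N => c ord0 (enum_rank a) * p_alpha a (Phi j c)) =
   (fun c : 'rV[R]_N => c ord0 (enum_rank a)) * (p_alpha a \o Phi j) by [].
rewrite deriveM; last 2 first.
- by apply: diff_derivable; exact: differentiable_coord.
- apply: diff_derivable; apply: differentiable_comp; first exact: Phi_diff.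
  exact: p_alpha_diff.
rewrite derive_coord !mxE scale0r add0r /= Phi0 mulrC.
by [].
Qed.

Lemma Phi_D j k : 'D_(basis_c R k) (Phi j.+1) 0 =
  'd phi (iter j phi x1) ('D_(basis_c R k) (Phi j) 0)
  + p_alpha (enum_val k) (iter j phi x1) *: e1 R d.
Proof.
rewrite PhiS deriveD; last 2 first.
- apply: diff_derivable; apply: differentiable_comp => //; exact: Phi_diff.
- apply: diff_derivable; apply: differentiableZl; exact: sfun_diff.
rewrite derive_comp ?Phi0 //; last exact: Phi_diff.
rewrite derive_Zl; last exact: sfun_diff.
congr (_ + _ *: _).
rewrite /sfun derive_bigsum; last first.
  by move=> a; apply: term_diff; apply: Phi_diff.
under eq_bigr do rewrite term_D.
rewrite (bigD1 (enum_val k)) //= enum_valK eqxx mul1r big1 ?addr0 // => a ak.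
have -> : (enum_rank a == k) = false.
  by apply/negbTE; apply: contra ak => /eqP <-; rewrite enum_rankK.
by rewrite mul0r.
Qed.
End Phi.


Section Interp.
Variable R : realType.

Lemma mono_step n (x : 'rV[R]_n) (e : 'I_n -> nat) j :
  \prod_i x ord0 i ^+ (e i + (i == j))%N = (\prod_i x ord0 i ^+ e i) * x ord0 j.
Proof.
rewrite (eq_bigr (fun i => x ord0 i ^+ e i * x ord0 i ^+ (i == j))); last first.
  by move=> i _; rewrite exprD.
rewrite big_split /=; congr (_ * _).
rewrite (bigD1 j) //= eqxx expr1 big1 ?mulr1 // => i /negbTE ->.
by rewrite expr0.
Qed.

Lemma sum_eq1 n (j : 'I_n) : (\sum_(i < n) (i == j) = 1)%N.
Proof.
by rewrite (bigD1 j) //= eqxx big1 // => i /negbTE ->.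
Qed.

Lemma interp_claim n K B (y : 'I_K -> 'rV[R]_n) (v : 'rV[R]_K) :
  (forall e : 'I_n -> nat, (\sum_i e i <= B)%N ->
     \sum_m v ord0 m * \prod_i (y m ord0 i) ^+ e i = 0) ->
  forall (s : seq ('I_n * R)) (e : 'I_n -> nat), (size s + \sum_i e i <= B)%N ->
  \sum_m v ord0 m * ((\prod_(q <- s) (y m ord0 q.1 - q.2)) * \prod_i (y m ord0 i) ^+ e i) = 0.
Proof.
move=> H; elim => [|q s IH] e He.
  by under eq_bigr do rewrite big_nil mul1r; apply: H.
pose e' := fun i => (e i + (i == q.1))%N.
have E1 := IH e'.
have E2 := IH e.
rewrite /e' in E1.
under eq_bigr do rewrite big_cons.
rewrite (eq_bigr (fun m => v ord0 m * ((\prod_(q0 <- s) (y m ord0 q0.1 - q0.2)) *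
      \prod_i y m ord0 i ^+ (e i + (i == q.1))%N)
   - q.2 * (v ord0 m * ((\prod_(q0 <- s) (y m ord0 q0.1 - q0.2)) *
      \prod_i y m ord0 i ^+ e i)))); last first.
  move=> m _; rewrite mono_step; ring.
rewrite sumrB -mulr_sumr E1 ?E2 ?mulr0 ?subr0 //.
  by move: He => /=; rewrite addSn => /ltnW.
move: He; rewrite big_split /= sum_eq1 /=.
by rewrite addnA addn1 addSn.
Qed.


Lemma interp n K B (y : 'I_K -> 'rV[R]_n.+1) (v : 'rV[R]_K) :
  injective y -> (K <= B.+1)%N ->
  (forall e : 'I_n.+1 -> nat, (\sum_i e i <= B)%N ->
     \sum_m v ord0 m * \prod_i (y m ord0 i) ^+ e i = 0) ->
  v = 0.
Proof.
move=> yinj KB H; apply/rowP => m0; rewrite mxE.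
pose ic l := odflt ord0 [pick i | y l ord0 i != y m0 ord0 i].
have Hic : forall l, l != m0 -> y l ord0 (ic l) != y m0 ord0 (ic l).
  move=> l lm; rewrite /ic; case: pickP => [i /= -> //|Hn].
  exfalso; move/eqP: lm; apply; apply: yinj; apply/rowP => i.
  by apply/eqP; move: (Hn i) => /= /negbFE.
pose s := [seq (ic l, y l ord0 (ic l)) | l <- enum (predC1 m0)].
have := interp_claim H (s := s) (e := fun _ => 0%N).
rewrite big1 ?addn0 //.
have -> : size s = K.-1 by rewrite size_map -cardE cardC1 card_ord.
have Hs : (K.-1 <= B)%N by lia.
move=> /(_ Hs).
have P1 : forall m, \prod_i y m ord0 i ^+ 0 = 1 by move=> m; apply: big1 => i _; rewrite expr0.
under eq_bigr do rewrite P1 mulr1 big_map big_enum.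
rewrite (bigD1 m0) //= [X in _ + X]big1 ?addr0; last first.
  move=> m mm0; rewrite (bigD1 m) //= subrr mul0r mulr0 //.
move/eqP; rewrite mulf_eq0 => /orP [/eqP //|].
move/prodf_eq0 => [l /= lm]; rewrite subr_eq0 => /eqP E.
by move: (Hic l lm); rewrite E eqxx.
Qed.

End Interp.


Section Final.
Variable R : realType.
Variables (d D : nat) (phi : 'rV[R]_d.+1 -> 'rV[R]_d.+1) (x1 : 'rV[R]_d.+1).
Hypothesis hphi : forall y, differentiable phi y.
Local Notation N := #|multi_index d D|.

Fixpoint wv (j m : nat) : 'rV[R]_d.+1 :=
  match j with
  | 0 => 0
  | j'.+1 => if m == j' then e1 R d
             else if (m < j')%N then 'd phi (iter j' phi x1) (wv j' m) else 0
  end.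

Lemma DPhi_formula j k : 'D_(basis_c R k) (@Phi R d D phi x1 j) 0 =
  \sum_(m < j) p_alpha (enum_val k) (iter m phi x1) *: wv j m.
Proof.
elim: j => [|j IH].
  have -> : @Phi R d D phi x1 0 = cst x1 by apply/funext.
  by rewrite derive_cst big_ord0.
rewrite Phi_D // IH linear_sum big_ord_recr /= eqxx; congr (_ + _).
apply: eq_bigr => m _; rewrite linearZ /=.
by rewrite ltn_eqF ?ltn_ord // ltn_ord.
Qed.


Lemma Vmx_entry (i : 'I_D.-1) k : Vmx D phi x1 i k =
  \sum_(m < i.+1) p_alpha (enum_val k) (iter m phi x1) * wv i.+1 m ord0 ord0.
Proof.
rewrite mxE.
have := @derive_mx R _ 1 d.+1 (@Phi R d D phi x1 i.+1) 0 (basis_c R k)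
  (diff_derivable (@Phi_diff R d D phi x1 hphi _)).
move/(congr1 (fun M : 'M[R]_(1, d.+1) => M ord0 ord0)) => /=; rewrite mxE => <-.
rewrite DPhi_formula summxE; apply: eq_bigr => m _; rewrite mxE.
by [].
Qed.

Definition Lmx : 'M[R]_D.-1 :=
  \matrix_(i, m) (if (m <= i)%N then wv i.+1 m ord0 ord0 else 0).
Definition Pmx : 'M[R]_(D.-1, N) :=
  \matrix_(m, k) p_alpha (enum_val k) (iter m phi x1).

Lemma V_LP : Vmx D phi x1 = Lmx *m Pmx.
Proof.
apply/matrixP => i k; rewrite Vmx_entry !mxE.
rewrite (big_ord_widen D.-1 (fun m => p_alpha (enum_val k) (iter m phi x1) * wv i.+1 m ord0 ord0)) ?ltn_ord //.
rewrite big_mkcond /=.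
apply: eq_bigr => m _; rewrite !mxE ltnS; case: ifP => _.
  by rewrite mulrC.
by rewrite mul0r.
Qed.

Lemma Lmx_unit : Lmx \in unitmx.
Proof.
rewrite unitmxE det_trig; last first.
  by apply/is_trig_mxP => i j ij; rewrite mxE leqNgt ij.
rewrite big1 ?unitr1 // => i _; rewrite mxE leqnn /= eqxx mxE eqxx.
by [].
Qed.


Lemma Pmx_free : (forall i j : 'I_D.-1, iter i phi x1 = iter j phi x1 -> i = j) ->
  row_free Pmx.
Proof.
move=> hinj; apply: inj_row_free => v Hv.
apply: (@interp R d D.-1 (2 * D).-1 (fun m : 'I_D.-1 => iter m phi x1) v).
- by move=> i j; apply: hinj.
- by lia.
move=> e He.
case: (posnP D) => [D0|Dpos].
  by rewrite big1 // => m; exfalso; have := ltn_ord m; lia.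
have lt i : (e i < 2 * D)%N.
  have : (e i <= \sum_i0 e i0)%N by rewrite (bigD1 i) //= leq_addr.
  by lia.
have Ha : (\sum_(i < d.+1) ([ffun i => Ordinal (lt i)] i : nat) <= (2 * D).-1)%N.
  by under eq_bigr do rewrite ffunE.
pose a : multi_index d D := exist (fun a : {ffun 'I_d.+1 -> 'I_(2 * D)} => (\sum_(i < d.+1) (a i : nat) <= (2 * D).-1)%N) _ Ha.
move/matrixP: Hv => /(_ ord0 (enum_rank a)); rewrite !mxE => Hv.
rewrite -[X in _ = X]Hv.
apply: eq_bigr => m _; rewrite mxE enum_rankK /p_alpha; congr (_ * _).
by apply: eq_bigr => i _; rewrite /= ffunE.
Qed.

End Final.

Local Close Scope classical_set_scope.

Theorem lemma10 (R : realType) (d D : nat)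
  (phi : 'rV[R]_d.+1 -> 'rV[R]_d.+1) (x1 : 'rV[R]_d.+1) :
  C2_diffeo phi ->
  (forall i j : 'I_D.-1, iter i phi x1 = iter j phi x1 -> i = j) ->
  \rank (Vmx D phi x1) = D.-1.
Proof.
move=> [[_ [hd [hc _]]] _] hinj.
have hphi := diff_partials (fun x u => hd u x) hc.
rewrite (@V_LP R d D phi x1 hphi) mxrankMfree ?mxrank_unit //.
  exact: Lmx_unit.
exact: Pmx_free.
Qed.
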